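(* Let $h\ge 0$ and $0\le i\le h$, and let $g_i^{(h)}(z)=\sum_{n\ge0}b^{(h)}_{n,i}z^n$, where $b^{(h)}_{n,i}$ is the number of reversed partial ternary paths of length $n$ ending at level $i$ all of whose ordinates are at most $h$. Then $$(-1)^i g_i^{(h)}(z)=\frac{d_{h-i}}{d_{h+1}}\,w_i-z^2\,\frac{d_{h-i-1}}{d_{h+1}}\,w_{i-1},$$ where $\sum_{j\ge0}d_jX^j=\dfrac{1}{1-X+z^3X^3}$, $\sum_{n\ge 0}w_nX^n=\dfrac{1}{1-zX^2+z^3X^3}$, and $w_{-1}=0$, $d_{-1}=0$.
   Context: A reversed partial ternary path of length $n$ is a lattice path $(0,c_0),\dots,(n,c_n)$ with $c_0=0$, steps $(1,2)$ or $(1,-1)$, and all $c_j\ge0$; it ends at level $c_n$. *)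

(* Defs.v *)
From HB Require Import structures.
From mathcomp Require Import all_boot all_order all_algebra.
Set Implicit Arguments. Unset Strict Implicit. Unset Printing Implicit Defensive.
Import Order.TTheory GRing.Theory Num.Theory.
Local Open Scope ring_scope.

(* A step is encoded by a bool: true = (1,2), false = (1,-1). *)
Definition step (b : bool) : int := if b then Posz 2 else Negz 0.

Definition height (s : seq bool) : int := \sum_(b <- s) step b.

Definition bounded_path (h : nat) (s : seq bool) : bool :=
  all (fun k => (0 <= height (take k s)) && (height (take k s) <= h%:Z))
      (iota 0 (size s).+1).

Definition bcount (h n i : nat) : nat :=
  #|[set t : n.-tuple bool | bounded_path h t && (height t == i%:Z)]|.

(* Coefficients c_0..c_n of the formal power series p / q (series given by
   coefficient functions), valid when q 0 = 1:
   c_n = p_n - sum_{k=1}^n q_k c_{n-k}. *)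
Fixpoint fps_div_seq (R : ringType) (p q : nat -> R) (n : nat) : seq R :=
  match n with
  | 0 => [:: p 0%N]
  | n'.+1 =>
      let cs := fps_div_seq p q n' in
      rcons cs (p n - \sum_(1 <= k < n.+1) q k * nth 0 cs (n - k)%N)
  end.

Definition fps_div (R : ringType) (p q : nat -> R) (n : nat) : R :=
  nth 0 (fps_div_seq p q n) n.

(* Polynomials in X with coefficients in Z[z]; the inner variable is z. *)
Definition z : {poly int} := 'X.
Definition Ddenom : {poly {poly int}} := 1 - 'X + (z ^+ 3)%:P * 'X^3.
Definition Wdenom : {poly {poly int}} := 1 - z%:P * 'X^2 + (z ^+ 3)%:P * 'X^3.

Definition dpoly (j : nat) : {poly int} :=
  fps_div (fun k => (k == 0%N)%:R) (fun k => Ddenom`_k) j.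
Definition wpoly (n : nat) : {poly int} :=
  fps_div (fun k => (k == 0%N)%:R) (fun k => Wdenom`_k) n.

Definition dz (j : int) : {poly int} :=
  match j with Posz m => dpoly m | Negz _ => 0 end.
Definition wz (j : int) : {poly int} :=
  match j with Posz m => wpoly m | Negz _ => 0 end.

(* Main.v *)
Require Import Defs.
From HB Require Import structures.
From mathcomp Require Import all_boot all_order all_algebra.
From mathcomp Require Import zify ring.
Set Implicit Arguments. Unset Strict Implicit. Unset Printing Implicit Defensive.
Import Order.TTheory GRing.Theory Num.Theory.
Local Open Scope ring_scope.

Section Fps.
Variables (R : ringType) (p q : nat -> R).

Lemma size_fps_div_seq n : size (fps_div_seq p q n) = n.+1.
Proof. by elim: n => [|n IH] //=; rewrite size_rcons IH. Qed.

Lemma nth_fps_div_seq n m : (m <= n)%N -> nth 0 (fps_div_seq p q n) m = fps_div p q m.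
Proof.
elim: n => [|n IH] Hm; first by move: Hm; rewrite leqn0 => /eqP ->.
rewrite leq_eqVlt in Hm; case/orP: Hm => [/eqP ->|Hm] //.
by rewrite /= nth_rcons size_fps_div_seq Hm IH.
Qed.

Lemma fps_divE n : fps_div p q n = p n - \sum_(1 <= k < n.+1) q k * fps_div p q (n - k)%N.
Proof.
case: n => [|n]; first by rewrite big_geq // subr0.
rewrite /fps_div /= nth_rcons size_fps_div_seq ltnn eqxx; congr (_ - _).
apply: eq_big_nat => k /andP[k1 k2]; rewrite nth_fps_div_seq //; lia.
Qed.

Lemma fps_div_uniq (e : nat -> R) n : q 0%N = 1 ->
  (forall m, (m <= n)%N -> \sum_(0 <= k < m.+1) q k * e (m - k)%N = p m) ->
  e n = fps_div p q n.
Proof.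
move=> q0; elim/ltn_ind: n => n IH H.
case: n IH H => [|n] IH H.
  have := H 0%N (leqnn _).
  by rewrite big_nat1 q0 mul1r /fps_div /= => ->.
rewrite fps_divE -(H n.+1 (leqnn _)) big_ltn // q0 mul1r subn0.
have -> : \sum_(1 <= k < n.+2) q k * fps_div p q (n.+1 - k) =
          \sum_(1 <= k < n.+2) q k * e (n.+1 - k)%N.
  apply: eq_big_nat => k /andP[k1 k2]; rewrite IH //; first lia.
  move=> m Hm; apply: H; lia.
by rewrite addrK.
Qed.

Definition cz (m : int) : R := match m with Posz k => fps_div p q k | Negz _ => 0 end.

Lemma cz_neg m : m < 0 -> cz m = 0.
Proof. by case: m. Qed.

Lemma fps_div_rec3 m : (1 <= m)%N -> (forall k, (4 <= k)%N -> q k = 0) ->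
  fps_div p q m = p m - (q 1%N * cz (m%:Z - 1) + q 2%N * cz (m%:Z - 2) + q 3%N * cz (m%:Z - 3)).
Proof.
move=> m1 q4; rewrite fps_divE; congr (_ - _).
set F := fun k : nat => q k * cz (m%:Z - k%:Z).
have E1 : \sum_(1 <= k < m + 4) F k = \sum_(1 <= k < m.+1) F k + \sum_(m.+1 <= k < m + 4) F k.
  by apply: big_cat_nat; lia.
have E2 : \sum_(1 <= k < m + 4) F k = \sum_(1 <= k < 4) F k + \sum_(4 <= k < m + 4) F k.
  by apply: big_cat_nat; lia.
have E3 : \sum_(m.+1 <= k < m + 4) F k = 0.
  apply: big1_seq => k /andP[_]; rewrite mem_iota => /andP[k1 k2].
  rewrite /F cz_neg ?mulr0 //; lia.
have E4 : \sum_(4 <= k < m + 4) F k = 0.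
  apply: big1_seq => k /andP[_]; rewrite mem_iota => /andP[k1 k2].
  rewrite /F q4 ?mul0r //.
have E5 : \sum_(1 <= k < m.+1) q k * fps_div p q (m - k)%N = \sum_(1 <= k < m.+1) F k.
  apply: eq_big_nat => k /andP[k1 k2]; rewrite /F subzn //; lia.
rewrite E5.
have -> : \sum_(1 <= k < m.+1) F k = \sum_(1 <= k < 4) F k.
  by move: E1; rewrite E3 addr0 E2 E4 addr0 => ->.
rewrite big_ltn; last by []. rewrite big_ltn; last by []. rewrite big_ltn; last by [].
rewrite big_geq; last by []. by rewrite /F addr0 !addrA.
Qed.

End Fps.

Lemma Dcoef k : Ddenom`_k = if k == 0%N then 1 else if k == 1%N then -1
   else if k == 3%N then z ^+ 3 else 0.
Proof.
rewrite /Ddenom coefD coefB coef1 coefX coefCM coefXn.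
by case: k => [|[|[|[|k]]]] /=; rewrite ?mulr0 ?mulr1 ?subr0 ?sub0r ?add0r ?addr0 ?subrr.
Qed.

Lemma Wcoef k : Wdenom`_k = if k == 0%N then 1 else if k == 2%N then - z
   else if k == 3%N then z ^+ 3 else 0.
Proof.
rewrite /Wdenom coefD coefB coef1 !coefCM !coefXn.
by case: k => [|[|[|[|k]]]] /=; rewrite ?mulr0 ?mulr1 ?subr0 ?sub0r ?add0r ?addr0 ?subrr.
Qed.

Lemma dz_cz x : dz x = cz (fun k => (k == 0%N)%:R) (fun k => Ddenom`_k) x.
Proof. by case: x. Qed.
Lemma wz_cz x : wz x = cz (fun k => (k == 0%N)%:R) (fun k => Wdenom`_k) x.
Proof. by case: x. Qed.

Lemma dz_rec (m : int) : 1 <= m -> dz m = dz (m - 1) - z ^+ 3 * dz (m - 3).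
Proof.
case: m => // m m1; have m1' : (1 <= m)%N by lia.
rewrite !dz_cz /= /fps_div -/(fps_div _ _ m) fps_div_rec3 //; last first.
  by move=> k k4; rewrite Dcoef; case: k k4 => [|[|[|[|k]]]].
rewrite !Dcoef /=; case: m m1 m1' => // m _ _ /=.
by rewrite mul0r addr0 mulN1r; ring.
Qed.

Lemma wz_rec (m : int) : 0 <= m -> wz m = (m == 0)%:R + z * wz (m - 2) - z ^+ 3 * wz (m - 3).
Proof.
case: m => // m _; case: m => [|m].
  by rewrite !wz_cz /= /fps_div /= !mulr0 subr0 addr0.
rewrite !wz_cz /= /fps_div -/(fps_div _ _ m.+1) fps_div_rec3 //; last first.
  by move=> k k4; rewrite Wcoef; case: k k4 => [|[|[|[|k]]]].
rewrite !Wcoef /=; ring.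
Qed.

Definition Pz (h : nat) (j : int) : {poly int} :=
  dz (h%:Z - j) * wz j - 'X^2 * dz (h%:Z - j - 1) * wz (j - 1).

Lemma Pz_out h j : (j < 0) || (h%:Z < j) -> Pz h j = 0.
Proof.
case/orP => Hj; rewrite /Pz.
  by rewrite [wz j]wz_cz [wz (j - 1)]wz_cz !cz_neg ?mulr0 ?subr0 //; lia.
by rewrite [dz (_ - j)]dz_cz [dz (_ - j - 1)]dz_cz !cz_neg ?mulr0 ?mul0r ?subr0 //; lia.
Qed.

Lemma Pz_rec h j : 0 <= j -> j <= h%:Z ->
  Pz h j = (j == 0)%:R * dz (h%:Z + 1) + 'X * (Pz h (j - 2) - Pz h (j + 1)).
Proof.
move=> j0 jh; rewrite /Pz; set a := h%:Z - j.
have -> : h%:Z - (j - 2) - 1 = a + 1 by rewrite /a; ring.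
have -> : h%:Z - (j - 2) = a + 2 by rewrite /a; ring.
have -> : h%:Z - (j + 1) - 1 = a - 2 by rewrite /a; ring.
have -> : h%:Z - (j + 1) = a - 1 by rewrite /a; ring.
have -> : j - 2 - 1 = j - 3 by ring.
have -> : j + 1 - 1 = j by ring.
have -> : (j == 0)%:R * dz (h%:Z + 1) = (j == 0)%:R * dz (a + 1).
  case: eqP => [Ej|_]; last by rewrite !mul0r.
  by rewrite /a Ej subr0.
have Da2 : dz (a + 2) = dz (a + 1) - z ^+ 3 * dz (a - 1).
  rewrite dz_rec; last by rewrite /a; lia.
  congr (dz _ - _ * dz _); ring.
have Da1 : dz (a + 1) = dz a - z ^+ 3 * dz (a - 2).
  rewrite dz_rec; last by rewrite /a; lia.
  congr (dz _ - _ * dz _); ring.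
have Wj1 : wz (j + 1) = z * wz (j - 1) - z ^+ 3 * wz (j - 2).
  rewrite wz_rec; last lia.
  have -> : (j + 1 == 0) = false by apply/eqP; lia.
  rewrite add0r; congr (_ * wz _ - _ * wz _); ring.
have Wj : wz j = (j == 0)%:R + z * wz (j - 2) - z ^+ 3 * wz (j - 3).
  by rewrite wz_rec.
rewrite Da2 Da1 Wj1 Wj /z; ring.
Qed.

Lemma card_sum (T : finType) (P : pred T) : #|[set t | P t]| = (\sum_(t : T) (P t : nat))%N.
Proof.
rewrite -sum1_card big_mkcond /=; apply: eq_bigr => t _; rewrite inE; by case: (P t).
Qed.

Lemma sum_tupleS (T : finType) n (F : seq T -> nat) :
  (\sum_(u : n.+1.-tuple T) F u = \sum_(t : n.-tuple T) \sum_(b : T) F (rcons t b))%N.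
Proof.
rewrite pair_big /=.
pose hh := fun p : n.-tuple T * T => [tuple of rcons p.1 p.2].
pose gg := fun u : n.+1.-tuple T => ([tuple of belast (thead u) (behead u)], last (thead u) (behead u)).
rewrite (reindex hh) /=; first by apply: eq_big.
exists gg => [[t b] _|u _].
  rewrite /gg /hh /=; set u := [tuple of rcons t b].
  have := lastI (thead u) (behead u); rewrite -[_ :: _]/(val [tuple of thead u :: behead u]).
  rewrite -tuple_eta /= => /rcons_inj [E1 E2].
  by congr (_, _); [apply: val_inj; rewrite /= -E1 | rewrite -E2].
apply: val_inj; rewrite /hh /gg /= -lastI.
by rewrite [in RHS](tuple_eta u).
Qed.

Lemma height_rcons s b : height (rcons s b) = height s + step b.
Proof. by rewrite /height -cats1 big_cat big_seq1. Qed.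

Lemma height_nil : height [::] = 0.
Proof. by rewrite /height big_nil. Qed.

Lemma bounded_rcons h s b : bounded_path h (rcons s b) =
  bounded_path h s && ((0 <= height (rcons s b)) && (height (rcons s b) <= h%:Z)).
Proof.
rewrite /bounded_path size_rcons.
have -> : iota 0 (size s).+2 = iota 0 (size s).+1 ++ [:: (size s).+1] by rewrite -addn1 iotaD.
rewrite all_cat [all _ [:: _]]/= andbT take_oversize ?size_rcons //; congr (_ && _).
apply: eq_in_all => k; rewrite mem_iota add0n => /andP[_ Hk].
by rewrite -cats1 takel_cat.
Qed.

Lemma bounded_height h s : bounded_path h s -> (0 <= height s) && (height s <= h%:Z).
Proof.
case/lastP: s => [|s b]; first by rewrite height_nil.
by rewrite bounded_rcons => /andP[_].
Qed.

Definition Bc (h n : nat) (x : int) : nat :=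
  #|[set t : n.-tuple bool | bounded_path h t && (height t == x)]|.

Lemma Bc0 h x : Bc h 0 x = (x == 0) :> nat.
Proof.
rewrite /Bc card_sum (eq_bigr (fun _ => (bounded_path h [::] && (height [::] == x) : nat))).
  rewrite sum_nat_const card_tuple /= mul1n height_nil eq_sym.
  by rewrite /bounded_path /= height_nil lexx.
by move=> t _; rewrite tuple0.
Qed.

Lemma Bc_rcons h t b x : (0 <= x) && (x <= h%:Z) ->
  (bounded_path h (rcons t b) && (height (rcons t b) == x)) =
  (bounded_path h t && (height t == x - step b)).
Proof.
move=> Hx; rewrite bounded_rcons height_rcons.
case E: (height t == x - step b).
  have -> : height t + step b = x by move/eqP: E => ->; rewrite subrK.
  by rewrite Hx eqxx !andbT.
have -> : (height t + step b == x) = false.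
  by apply/negbTE/negP => /eqP E'; move: E; rewrite -E' addrK eqxx.
by rewrite !andbF.
Qed.

Lemma BcS h n x : Bc h n.+1 x =
  if (0 <= x) && (x <= h%:Z) then (Bc h n (x - 2) + Bc h n (x + 1))%N else 0%N.
Proof.
rewrite /Bc !card_sum (sum_tupleS n (fun s => (bounded_path h s && (height s == x) : nat))); case: ifP => Hx.
  rewrite -big_split /=; apply: eq_bigr => t _; rewrite big_bool /=.
  by rewrite !Bc_rcons // opprK.
apply: big1 => t _; rewrite big_bool /=.
suff G : forall b, (bounded_path h (rcons t b) && (height (rcons t b) == x)) = false by rewrite !G.
move=> b; apply/negbTE/negP => /andP[/bounded_height H /eqP E].
by move: H; rewrite E Hx.
Qed.

Lemma dcoef0 m : (dpoly m)`_0 = 1.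
Proof.
elim/ltn_ind: m => m IH; case: m IH => [|m] IH; first by rewrite /dpoly /fps_div /= coef1.
have := dz_rec (m := m.+1%:Z) isT; rewrite /= => ->.
rewrite coefB /z coefXnM /= subr0 subn1 /= IH //.
Qed.

Lemma Bc_out h m j : ~~ ((0 <= j) && (j <= h%:Z)) -> Bc h m j = 0%N.
Proof.
case: m => [|m] Hj; last by rewrite BcS (negbTE Hj).
rewrite Bc0; case: eqP => // E; move: Hj; by rewrite E lexx.
Qed.

Definition f (h : nat) (j : int) (m : nat) : int := (-1) ^+ (absz j) * (Bc h m j)%:Z.

Lemma f_out h j m : ~~ ((0 <= j) && (j <= h%:Z)) -> f h j m = 0.
Proof. by move=> Hj; rewrite /f Bc_out // mulr0. Qed.

Lemma f_rec h j m : (0 <= j) && (j <= h%:Z) -> f h j m.+1 = f h (j - 2) m - f h (j + 1) m.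
Proof.
move=> Hj; rewrite /f BcS Hj PoszD mulrDr; congr (_ + _).
  case: j Hj => // a Ha; case: a Ha => [|[|a]] Ha.
  - by rewrite Bc_out ?mulr0.
  - by rewrite Bc_out ?mulr0.
  - have -> : (a.+2%:Z - 2) = a by lia.
    by rewrite !exprS !mulN1r opprK.
case: j Hj => // a Ha.
have -> : absz (a%:Z + 1) = a.+1 by rewrite -PoszD addn1.
by rewrite exprS mulN1r mulNr opprK.
Qed.

Lemma coefbM (b : bool) (p : {poly int}) k : (b%:R * p)`_k = b%:R * p`_k.
Proof. by case: b; rewrite ?mul1r ?mul0r ?coef0. Qed.

Lemma conv h n j : \sum_(0 <= k < n.+1) (dpoly h.+1)`_k * f h j (n - k)%N = (Pz h j)`_n.
Proof.
case Hj: ((0 <= j) && (j <= h%:Z)); last first.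
  rewrite Pz_out ?coef0; last by move/negbT: Hj; lia.
  by apply: big1_seq => k _; rewrite f_out ?Hj // mulr0.
elim: n j Hj => [|n IH] j Hj.
  rewrite big_nat1 dcoef0 mul1r.
  case/andP: Hj => j0 jh; rewrite Pz_rec // coefD coefbM coefXM /= addr0.
  rewrite dcoef0 /f; case: eqP => [->|Ej] /=; first by rewrite Bc0 eqxx.
  by rewrite subnn Bc0 (introF eqP Ej) mulr0.
rewrite big_nat_recr //= subnn.
have -> : \sum_(0 <= i < n.+1) (dpoly h.+1)`_i * f h j (n.+1 - i)%N =
          \sum_(0 <= i < n.+1) (dpoly h.+1)`_i * f h (j - 2) (n - i)%N -
          \sum_(0 <= i < n.+1) (dpoly h.+1)`_i * f h (j + 1) (n - i)%N.
  rewrite -sumrB; apply: eq_big_nat => k /andP[_ Hk].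
  by rewrite subSn // f_rec // mulrBr.
have E : forall j', \sum_(0 <= i < n.+1) (dpoly h.+1)`_i * f h j' (n - i)%N = (Pz h j')`_n.
  move=> j'; case Hj': ((0 <= j') && (j' <= h%:Z)); first exact: IH.
  rewrite Pz_out ?coef0; last by move/negbT: Hj'; lia.
  by apply: big1_seq => k _; rewrite f_out ?Hj' // mulr0.
rewrite !E; case/andP: Hj => j0 jh.
rewrite (Pz_rec j0 jh); set P1 := Pz h (j - 2); set P2 := Pz h (j + 1).
rewrite [X in _ = X]coefD [X in _ = X + _]coefbM [X in _ = _ + X]coefXM /= [X in _ = _ + X]coefB.
rewrite addn1 addrC; congr (_ + _); rewrite mulrC /f Bc0.
case: eqP => [->|Ej]; first by rewrite /= expr0 !mul1r.
by rewrite mulr0 !mul0r.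
Qed.

Unset Implicit Arguments.

Theorem mainTheorem6 (h i : nat) (hi : (i <= h)%N) (n : nat) :
  (-1) ^+ i * (bcount h n i)%:Z =
  fps_div
    (fun k => (dz (h%:Z - i%:Z) * wz i%:Z
               - 'X^2 * dz (h%:Z - i%:Z - 1) * wz (i%:Z - 1))`_k)
    (fun k => (dpoly h.+1)`_k) n.
Proof.
have -> : (-1) ^+ i * (bcount h n i)%:Z = f h i%:Z n by [].
apply: fps_div_uniq; first exact: dcoef0.
move=> m _; exact: (conv h m i%:Z).
Qed.
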